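(* Fix $\gamma \geq 1$ and $0 \leq \rho < 1$. Let $A(u,v) = (u,u+v)$, $\mathbf{1} = (1,1)$, $\mathbf{c} = (\gamma,1)$, and let $T,M:\mathbb{R}^2\to\mathbb{R}^2$ be defined by $$T\mathbf{x} = \begin{cases} A\mathbf{x} + \mathbf{1}, & \langle \mathbf{c},\mathbf{x}\rangle \leq -1/2,\\ A\mathbf{x}, & |\langle \mathbf{c},\mathbf{x}\rangle| < 1/2,\\ A\mathbf{x} - \mathbf{1}, & \langle \mathbf{c},\mathbf{x}\rangle \geq 1/2,\end{cases}\qquad M(u,v) = \begin{cases} T(\rho u,\rho v), & u \geq 0,\\ T(u,v), & u<0.\end{cases}$$ Let $S = S^+\cup S^-$ where $S^+ = \{(u,v) : -1/2 \leq \gamma u + v \leq 1/2 + \gamma,\ 0 \leq u < 1\}$ and $S^- = \{(u,v) : -(1/2+\gamma) \leq \gamma u + v \leq 1/2,\ -1 \leq u < 0\}$. Suppose $(u_0,v_0) \in S$ and let $(u_n,v_n) = M^n(u_0,v_0)$. Let $\mathcal{I}^+ = \{n \geq 0 : u_n \geq 0\}$. Then the subsequence $(u_n)_{n\in\mathcal{I}^+}$ converges to zero as $n\to\infty$.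
   Context: $\langle\cdot,\cdot\rangle$ is the standard inner product on $\mathbb{R}^2$. *)

(* Defs.v *)
From Stdlib Require Import Reals.
Open Scope R_scope.

Definition vec2 := (R * R)%type.

Definition inner (x y : vec2) : R := fst x * fst y + snd x * snd y.

Definition Amap (x : vec2) : vec2 := (fst x, fst x + snd x).

Definition one2 : vec2 := (1, 1).
Definition cvec (gamma : R) : vec2 := (gamma, 1).

Definition vadd (x y : vec2) : vec2 := (fst x + fst y, snd x + snd y).
Definition vsub (x y : vec2) : vec2 := (fst x - fst y, snd x - snd y).

Definition Tmap (gamma : R) (x : vec2) : vec2 :=
  let s := inner (cvec gamma) x in
  if Rle_dec s (-(1/2)) then vadd (Amap x) one2
  else if Rlt_dec (Rabs s) (1/2) then Amap x
  else vsub (Amap x) one2.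

Definition Mmap (gamma rho : R) (x : vec2) : vec2 :=
  if Rle_dec 0 (fst x) then Tmap gamma (rho * fst x, rho * snd x)
  else Tmap gamma x.

Definition Splus (gamma : R) (x : vec2) : Prop :=
  -(1/2) <= gamma * fst x + snd x <= 1/2 + gamma /\ 0 <= fst x < 1.

Definition Sminus (gamma : R) (x : vec2) : Prop :=
  -(1/2 + gamma) <= gamma * fst x + snd x <= 1/2 /\ -1 <= fst x < 0.

Definition Sset (gamma : R) (x : vec2) : Prop := Splus gamma x \/ Sminus gamma x.

Definition orbit (gamma rho : R) (x0 : vec2) (n : nat) : vec2 :=
  Nat.iter n (Mmap gamma rho) x0.

(* Main.v *)
Require Import Defs.
From Stdlib Require Import Reals Lra Psatz Classical Lia.
Open Scope R_scope.

Definition S0 (gamma : R) (x : vec2) : Prop :=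
  Splus gamma x \/ (Sminus gamma x /\ gamma * fst x + snd x < 1/2).

Definition pot (x : vec2) : R := if Rle_dec 0 (fst x) then fst x else fst x + 1.


Section S.
Variables gamma rho : R.
Hypothesis hgamma : 1 <= gamma.
Hypothesis hrho : 0 <= rho < 1.

Lemma Tspec (u v : R) :
  (gamma*u+v <= -(1/2) /\ Tmap gamma (u,v) = (u+1, u+v+1)) \/
  (-(1/2) < gamma*u+v < 1/2 /\ Tmap gamma (u,v) = (u, u+v)) \/
  (1/2 <= gamma*u+v /\ Tmap gamma (u,v) = (u-1, u+v-1)).
Proof.
  unfold Tmap, inner, cvec, Amap, vadd, vsub, one2; simpl.
  destruct (Rle_dec _ _) as [h|h]; [left; split; [lra|reflexivity]|].
  destruct (Rlt_dec _ _) as [h2|h2].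
  - right; left; apply Rabs_def2 in h2; split; [lra|reflexivity].
  - right; right; split; [|reflexivity].
    unfold Rabs in h2; destruct (Rcase_abs _); lra.
Qed.

Lemma Mspec (u v : R) :
  (0 <= u /\ rho*(gamma*u+v) <= -(1/2) /\ Mmap gamma rho (u,v) = (rho*u+1, rho*u+rho*v+1)) \/
  (0 <= u /\ -(1/2) < rho*(gamma*u+v) < 1/2 /\ Mmap gamma rho (u,v) = (rho*u, rho*u+rho*v)) \/
  (0 <= u /\ 1/2 <= rho*(gamma*u+v) /\ Mmap gamma rho (u,v) = (rho*u-1, rho*u+rho*v-1)) \/
  (u < 0 /\ gamma*u+v <= -(1/2) /\ Mmap gamma rho (u,v) = (u+1, u+v+1)) \/
  (u < 0 /\ -(1/2) < gamma*u+v < 1/2 /\ Mmap gamma rho (u,v) = (u, u+v)) \/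
  (u < 0 /\ 1/2 <= gamma*u+v /\ Mmap gamma rho (u,v) = (u-1, u+v-1)).
Proof.
  unfold Mmap; simpl.
  destruct (Rle_dec 0 u) as [h|h].
  - destruct (Tspec (rho*u) (rho*v)) as [[a b]|[[a b]|[a b]]]; rewrite b.
    + left; split; [lra|split;[nra|reflexivity]].
    + right; left; split; [lra|split;[nra|reflexivity]].
    + right; right; left; split; [lra|split;[nra|reflexivity]].
  - destruct (Tspec u v) as [[a b]|[[a b]|[a b]]]; rewrite b.
    + do 3 right; left; split; [lra|split;[nra|reflexivity]].
    + do 4 right; left; split; [lra|split;[nra|reflexivity]].
    + do 5 right; split; [lra|split;[nra|reflexivity]].
Qed.

Lemma S0_step u v : S0 gamma (u,v) ->
  S0 gamma (Mmap gamma rho (u,v)) /\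
  pot (Mmap gamma rho (u,v)) = (if Rle_dec 0 u then rho * pot (u,v) else pot (u,v)).
Proof.
  unfold S0, Splus, Sminus, pot; simpl; intros H.
  destruct (Mspec u v) as [[h1 [h2 E]]|[[h1 [h2 E]]|[[h1 [h2 E]]|[[h1 [h2 E]]|[[h1 [h2 E]]|[h1 [h2 E]]]]]]];
  rewrite E; simpl;
  repeat (destruct (Rle_dec _ _)); simpl;
  (split; [ | try lra]); try (exfalso; nra); try nra.
Qed.
Lemma orbit_S x n : orbit gamma rho x (S n) = orbit gamma rho (Mmap gamma rho x) n.
Proof. unfold orbit. rewrite <- Nat.iter_swap_gen with (g:=Mmap gamma rho) (f:= Mmap gamma rho); reflexivity. Qed.

Lemma shift x : (exists j, S0 gamma (orbit gamma rho (Mmap gamma rho x) j)) ->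
   exists j, S0 gamma (orbit gamma rho x j).
Proof. intros [j H]; exists (S j); rewrite orbit_S; exact H. Qed.

Ltac fin := exists 0%nat; simpl; unfold S0, Splus, Sminus; simpl;
   first [ left; split; split; nra | right; split; [split; split; nra | nra] ].

Ltac adv u v :=
  apply shift;
  destruct (Mspec u v) as [[? [? E]]|[[? [? E]]|[[? [? E]]|[[? [? E]]|[[? [? E]]|[? [? E]]]]]]];
  rewrite E; clear E; try (exfalso; nra).

Ltac go n := match n with O => idtac | S ?m => first [fin | match goal with |- exists j, S0 _ (orbit _ _ (?u,?v) j) => adv u v; go m end] end.

Lemma bad3 w : 0 <= w -> 3*w + gamma - 5/2 < -(1/2) ->
  exists j, S0 gamma (orbit gamma rho (w, 3*w+gamma-5/2 - gamma*w) j).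
Proof.
  intros hw hs.
  adv w (3*w+gamma-5/2 - gamma*w).
  2: fin.
  replace (rho * w + 1, rho * w + rho * (3 * w + gamma - 5 / 2 - gamma * w) + 1)
    with (1 + rho*w, (rho*(4*w+gamma-5/2)+gamma+1) - gamma*(1+rho*w)) by (f_equal; ring).
  assert (hs4 : 1/2 <= rho*(4*w+gamma-5/2)+gamma+1) by nra.
  adv (1 + rho*w) ((rho*(4*w+gamma-5/2)+gamma+1) - gamma*(1+rho*w)).
  set (u5 := rho * (1 + rho * w) - 1).
  replace (rho * (1 + rho * w) + rho * (rho * (4 * w + gamma - 5 / 2) + gamma + 1 - gamma * (1 + rho * w)) - 1)
    with ((rho*rho*(5*w+gamma-5/2) + rho*(gamma+2) - gamma - 1) - gamma*u5) by (unfold u5; ring).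
  assert (hw3 : w < 1/3) by lra.
  assert (H2' : 1/2 <= rho*(rho*(4*w+gamma-5/2)+gamma+1)) by (ring_simplify in H2; ring_simplify; lra).
  exists 0%nat; simpl; unfold S0, Splus, Sminus; simpl; unfold u5.
  destruct (Rle_dec 0 (rho * (1 + rho * w) - 1)).
  - left. split; split; nra.
  - right. split; [split; split|]; nra.
Qed.

Lemma bad u0 : -1 <= u0 < 0 ->
  exists j, S0 gamma (orbit gamma rho (u0, 1/2 - gamma*u0) j).
Proof.
  intros hu.
  adv u0 (1/2 - gamma*u0).
  adv (u0-1) (u0 + (1/2 - gamma*u0) - 1).
  replace (u0 - 1 + 1, u0 - 1 + (u0 + (1 / 2 - gamma * u0) - 1) + 1)
    with (u0, (2*u0 - 1/2) - gamma*u0) by (apply injective_projections; simpl; field).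
  destruct (Rle_dec (-(1/2+gamma)) (2*u0-1/2)).
  { fin. }
  adv u0 ((2*u0 - 1/2) - gamma*u0).
  replace (u0 + 1, u0 + (2 * u0 - 1 / 2 - gamma * u0) + 1) with
    (u0+1, 3*(u0+1)+gamma-5/2 - gamma*(u0+1)) by (apply injective_projections; simpl; field).
  destruct (Rle_dec (-(1/2)) (3*(u0+1)+gamma-5/2)).
  { fin. }
  apply bad3; lra.
Qed.

Lemma pot_bounds x : S0 gamma x -> 0 <= pot x < 1 /\ (0 <= fst x -> pot x = fst x).
Proof.
  destruct x as [u v]; unfold S0, Splus, Sminus, pot; simpl; intros H.
  destruct (Rle_dec 0 u); split; try lra; intros; lra.
Qed.

Lemma S0_orbit x : S0 gamma x -> forall n, S0 gamma (orbit gamma rho x n) /\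
  pot (orbit gamma rho x (S n)) =
  (if Rle_dec 0 (fst (orbit gamma rho x n)) then rho * pot (orbit gamma rho x n)
   else pot (orbit gamma rho x n)).
Proof.
  intros H0 n; induction n as [|n IH].
  - simpl. destruct x as [u v]. split; [exact H0|exact (proj2 (S0_step u v H0))].
  - destruct IH as [IH _].
    change (orbit gamma rho x (S n)) with (Mmap gamma rho (orbit gamma rho x n)).
    change (orbit gamma rho x (S (S n))) with (Mmap gamma rho (Mmap gamma rho (orbit gamma rho x n))).
    destruct (orbit gamma rho x n) as [u v] eqn:E.
    destruct (S0_step u v IH) as [A _].
    destruct (Mmap gamma rho (u,v)) as [u' v'].
    split; [exact A|exact (proj2 (S0_step u' v' A))].
Qed.

Lemma pot_mono x : S0 gamma x -> forall k n, pot (orbit gamma rho x (k + n)) <= pot (orbit gamma rho x n).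
Proof.
  intros H0 k n; induction k as [|k IH]; [simpl; lra|]. change (S k + n)%nat with (S (k + n)).
  destruct (S0_orbit x H0 (k+n)) as [A B]. rewrite B.
  destruct (pot_bounds _ A) as [[C _] _].
  destruct (Rle_dec _ _); nra.
Qed.

Lemma conv0 x : S0 gamma x -> forall m, exists N, forall n, (N <= n)%nat ->
  0 <= fst (orbit gamma rho x n) -> pot (orbit gamma rho x n) <= rho ^ m.
Proof.
  intros H0 m; induction m as [|m [N HN]].
  - exists 0%nat; intros n _ _. destruct (pot_bounds _ (proj1 (S0_orbit x H0 n))). simpl; lra.
  - destruct (classic (exists n1, (N <= n1)%nat /\ 0 <= fst (orbit gamma rho x n1))) as [[n1 [h1 h2]]|hno].
    + exists (S n1); intros n hn _.
      replace n with ((n - S n1) + S n1)%nat by lia.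
      eapply Rle_trans; [apply pot_mono; exact H0|].
      destruct (S0_orbit x H0 n1) as [A B]; rewrite B.
      destruct (Rle_dec _ _) as [_|c]; [|contradiction].
      simpl. apply Rmult_le_compat_l; [lra|]. apply HN; auto.
    + exists N; intros n hn hu. exfalso; apply hno; exists n; auto.
Qed.

Lemma conv_S0 x : S0 gamma x -> forall eps, 0 < eps -> exists N, forall n, (N <= n)%nat ->
  0 <= fst (orbit gamma rho x n) -> Rabs (fst (orbit gamma rho x n)) < eps.
Proof.
  intros H0 eps he.
  destruct (pow_lt_1_zero rho) with (y := eps) as [m Hm]; [rewrite Rabs_right; lra|lra|].
  destruct (conv0 x H0 m) as [N HN].
  exists N; intros n hn hu.
  destruct (pot_bounds _ (proj1 (S0_orbit x H0 n))) as [_ P].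
  rewrite Rabs_right by lra. rewrite <- (P hu).
  specialize (Hm m (le_n m)). rewrite Rabs_right in Hm by (apply Rle_ge, pow_le; lra).
  specialize (HN n hn hu). lra.
Qed.

End S.

Theorem lemma1 (gamma rho : R) (hgamma : 1 <= gamma) (hrho : 0 <= rho < 1)
  (u0 v0 : R) (hS : Sset gamma (u0, v0)) :
  forall eps : R, 0 < eps ->
    exists N : nat, forall n : nat, (N <= n)%nat ->
      0 <= fst (orbit gamma rho (u0, v0) n) ->
      Rabs (fst (orbit gamma rho (u0, v0) n)) < eps.
Proof.
  intros eps he.
  assert (H : exists j, S0 gamma (orbit gamma rho (u0, v0) j)).
  { destruct (Rlt_dec (gamma*u0+v0) (1/2)) as [hl|hl].
    - exists 0%nat; simpl; unfold S0; unfold Sset, Splus, Sminus in *; simpl in *; tauto.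
    - destruct hS as [hS|hS].
      + exists 0%nat; simpl; unfold S0; left; exact hS.
      + unfold Sminus in hS; simpl in hS.
        replace v0 with (1/2 - gamma*u0) by lra.
        apply bad; auto; lra. }
  destruct H as [j Hj].
  destruct (conv_S0 gamma rho hgamma hrho _ Hj eps he) as [N HN].
  exists (N + j)%nat; intros n hn hu.
  assert (E : orbit gamma rho (u0, v0) n = orbit gamma rho (orbit gamma rho (u0, v0) j) (n - j)).
  { unfold orbit. rewrite <- Nat.iter_add. f_equal. lia. }
  rewrite E in *. apply HN; auto; lia.
Qed.
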